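(* Let $Q=(q_n)_{n\ge1}$ be a basic sequence that is infinite in limit. Then the set $\Theta_Q$ is nowhere dense.
   Context: A basic sequence is a sequence $Q=(q_n)_{n\ge1}$ of integers with $q_n\ge 2$; it is infinite in limit if $q_n\to\infty$. $\mathbb{N}$ denotes the positive integers. For each positive integer $j$ let $\nu_j=\min\{N : q_m\ge 2j^2 \text{ for all } m\ge N\}$. Define $l_1=\max(\nu_2-1,1)$ and, recursively for $i\ge 2$, $l_i=\max\big(\min\{k\in\mathbb{N} : l_1+2l_2+\cdots+(i-1)l_{i-1}+ik\ge \nu_{i+1}-1\},1\big)$. Put $L_i=\sum_{j=1}^i jl_j$ (with $L_0=0$). Let $S_Q=\{(a,b,c)\in\mathbb{N}^3 : b\le l_a,\ c\le a\}$ and $\phi_Q(a,b,c)=L_{a-1}+(b-1)a+c$; $\phi_Q$ is a bijection $S_Q\to\mathbb{N}$. A $Q$-special sequence is a family of integers $F=(F_{(a,b,c)})_{(a,b,c)\in S_Q}$ with $F_{(a,b,1)}=0$ for all $(a,b,1)\in S_Q$ and $\frac{F_{(a,b,c)}}{q_{\phi_Q(a,b,c)}}\in\left[\frac{c-1}{a}-\frac{1}{2a^2},\frac{c-1}{a}+\frac{1}{2a^2}\right]$ for $(a,b,c)\in S_Q$ with $c>1$. Let $\Gamma_Q$ be the set of $Q$-special sequences. For $F\in\Gamma_Q$ put $E_{F,n}=F_{\phi_Q^{-1}(n)}$ and $x_F=\sum_{n=1}^\infty \frac{E_{F,n}}{q_1q_2\cdots q_n}$. Define $\Theta_Q=\{x_F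 : F\in\Gamma_Q\}\subseteq[0,1)$. *)

(* Defs.v *)
From HB Require Import structures.
From mathcomp Require Import all_boot all_order all_algebra.
From mathcomp Require Import all_classical all_reals all_analysis.
From mathcomp Require Import zify.
Set Implicit Arguments. Unset Strict Implicit. Unset Printing Implicit Defensive.
Import Order.TTheory GRing.Theory Num.Theory.
Import numFieldTopology.Exports numFieldNormedType.Exports.

(* A sequence Q = (q_n)_{n>=1} is a function q : nat -> nat; q 0 is ignored. *)
Definition basic_seq (q : nat -> nat) : Prop := forall n, (1 <= n)%N -> (2 <= q n)%N.
Definition infinite_in_limit (q : nat -> nat) : Prop :=
  forall M : nat, exists N : nat, forall n, (N <= n)%N -> (M <= q n)%N.

(* nu_j = min {N in N_{>=1} : forall m >= N, q_m >= 2 j^2}  (0 if no such N). *)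
Definition nu_pred (q : nat -> nat) (j N : nat) : Prop :=
  (1 <= N)%N /\ forall m, (N <= m)%N -> (2 * j ^ 2 <= q m)%N.

Definition nu (q : nat -> nat) (j : nat) : nat :=
  match pselect (exists N, nu_pred q j N) with
  | left h =>
      @ex_minn (fun N => `[< nu_pred q j N >])
        (let: ex_intro N hN := h in ex_intro _ N (asboolT hN))
  | right _ => 0%N
  end.

Lemma lnext_ex (i Lp t : nat) : exists k, (0 < k)%N && (t - 1 <= Lp + i.+1 * k)%N.
Proof. exists t.+1; apply/andP; split => //; nia. Qed.

Definition lnext (i Lp t : nat) : nat := maxn (ex_minn (lnext_ex i Lp t)) 1.

(* L_i = sum_{j<=i} j l_j, with l_1 = max(nu_2 - 1, 1) and
   l_i = max(min{k : L_{i-1} + i k >= nu_{i+1} - 1}, 1) for i >= 2. *)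
Fixpoint LL (q : nat -> nat) (i : nat) : nat :=
  match i with
  | 0 => 0%N
  | i'.+1 =>
      let l := if i' is 0 then maxn (nu q 2 - 1) 1
               else lnext i' (LL q i') (nu q i'.+2) in
      (LL q i' + i'.+1 * l)%N
  end.

Definition ll (q : nat -> nat) (i : nat) : nat :=
  match i with
  | 0 => 0%N
  | 1 => maxn (nu q 2 - 1) 1
  | i'.+1 => lnext i' (LL q i') (nu q i'.+2)
  end.

Definition S_Q (q : nat -> nat) : set (nat * nat * nat) :=
  [set t | let: (a, b, c) := t in
     [/\ (1 <= a)%N, (1 <= b)%N, (b <= ll q a)%N, (1 <= c)%N & (c <= a)%N]].

Definition phi_Q (q : nat -> nat) (t : nat * nat * nat) : nat :=
  let: (a, b, c) := t in (LL q a.-1 + b.-1 * a + c)%N.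

(* phi_Q^{-1} (phi_Q is a bijection S_Q -> N_{>=1}) *)
Definition phi_Q_inv (q : nat -> nat) (n : nat) : nat * nat * nat :=
  xget (0%N, 0%N, 0%N) [set t | S_Q q t /\ phi_Q q t = n].

Local Open Scope ring_scope.

(* Q-special sequences: integer families indexed by S_Q (values off S_Q irrelevant). *)
Definition Q_special (R : realType) (q : nat -> nat) (F : nat * nat * nat -> int) : Prop :=
  forall a b c, S_Q q (a, b, c) ->
    (c = 1%N -> F (a, b, c) = 0) /\
    ((1 < c)%N ->
       let r := (F (a, b, c))%:~R / (q (phi_Q q (a, b, c)))%:R : R in
       (c.-1)%:R / a%:R - 1 / (2 * a%:R ^+ 2) <= r /\
       r <= (c.-1)%:R / a%:R + 1 / (2 * a%:R ^+ 2)).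

Definition E_F (q : nat -> nat) (F : nat * nat * nat -> int) (n : nat) : int :=
  F (phi_Q_inv q n).

Definition x_F (R : realType) (q : nat -> nat) (F : nat * nat * nat -> int) : R :=
  limn (fun N : nat =>
    \sum_(1 <= n < N) ((E_F q F n)%:~R / (\prod_(1 <= k < n.+1) q k)%:R) : R).

Definition Theta_Q (R : realType) (q : nat -> nat) : set R :=
  [set x | exists F, Q_special R q F /\ x = x_F R q F].

Definition nowhere_dense (T : topologicalType) (A : set T) : Prop :=
  interior (closure A) = set0.
Arguments Q_special R q F : clear implicits.
Arguments x_F R q F : clear implicits.
Arguments Theta_Q R q : clear implicits.

(* Main.v *)
Require Import Defs.
From HB Require Import structures.
From mathcomp Require Import all_boot all_order all_algebra.
From mathcomp Require Import all_classical all_reals all_analysis.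
Import numFieldTopology.Exports numFieldNormedType.Exports.
From mathcomp Require Import zify ring lra.
Import Order.TTheory GRing.Theory Num.Theory.
Set Implicit Arguments. Unset Strict Implicit. Unset Printing Implicit Defensive.

Section Comb.
Variable q : nat -> nat.

Lemma LL_succ i : LL q i.+1 = (LL q i + i.+1 * ll q i.+1)%N.
Proof. by case: i. Qed.

Lemma ll_pos i : (1 <= ll q i.+1)%N.
Proof. by case: i => [|i] /=; rewrite /lnext ?leq_maxr. Qed.

Lemma LL_incr i : (LL q i + i.+1 <= LL q i.+1)%N.
Proof. rewrite LL_succ; have := ll_pos i; nia. Qed.

Lemma LL_mono i j : (i <= j)%N -> (LL q i <= LL q j)%N.
Proof.
move/subnKC <-; elim: (j - i)%N => [|k IH]; first by rewrite addn0.
rewrite addnS; apply: (leq_trans IH); have := LL_incr (i + k); lia.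
Qed.

Lemma LL_ge i : (i <= LL q i)%N.
Proof. elim: i => [//|i IH]; have := LL_incr i; lia. Qed.

Lemma find_block n : (1 <= n)%N -> exists a, (LL q a < n <= LL q a.+1)%N.
Proof.
move=> n1.
suff H : forall i, (n <= LL q i)%N -> exists a, (LL q a < n <= LL q a.+1)%N.
  exact: (H n (LL_ge n)).
elim=> [/= |i IH] h; first lia.
case: (leqP n (LL q i)) => h2; first exact: IH.
by exists i; rewrite h2 h.
Qed.

Lemma phi_surj n : (1 <= n)%N -> exists t, S_Q q t /\ phi_Q q t = n.
Proof.
move=> /find_block [a /andP [h1 h2]].
rewrite LL_succ in h2.
set r := (n - LL q a - 1)%N.
have hr : (r < ll q a.+1 * a.+1)%N by rewrite /r; lia.
exists (a.+1, (r %/ a.+1).+1, (r %% a.+1).+1); split.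
  rewrite /S_Q /=; split => //.
  - by rewrite ltn_divLR.
  - by rewrite ltn_mod.
rewrite /phi_Q /=.
have := divn_eq r a.+1; rewrite /r; lia.
Qed.

Lemma phi_block a b c : S_Q q (a, b, c) ->
  (LL q a.-1 < phi_Q q (a, b, c) <= LL q a)%N.
Proof.
case=> a1 b1 bl c1 ca; rewrite /phi_Q.
case: a a1 bl ca => [//|a] _ bl ca; rewrite LL_succ succnK.
apply/andP; split; first (set u := LL q a; set v := b.-1 * a.+1; lia).
have : (b.-1 * a.+1 <= (ll q a.+1).-1 * a.+1)%N by apply: leq_mul => //; lia.
have := ll_pos a. nia.
Qed.

Lemma zero_pos a t : S_Q q t -> phi_Q q t = (LL q a).+1 -> t.2 = 1%N.
Proof.
case: t => [[a' b'] c'] hS hp.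
have := phi_block hS; rewrite hp => /andP [h1 h2].
case: hS => a1 b1 bl c1 ca.
have ea : a'.-1 = a.
  apply/eqP; rewrite eqn_leq; apply/andP; split.
    case: (leqP a'.-1 a) => // h; have := LL_mono h; have := LL_incr a; lia.
  case: (leqP a a'.-1) => // h.
  have : (a'.-1.+1 <= a)%N by [].
  move/LL_mono; have -> : a'.-1.+1 = a' by lia. lia.
move: hp; rewrite /phi_Q ea /=; set v := (b'.-1 * a')%N; lia.
Qed.

End Comb.

Local Open Scope ring_scope.

Lemma real_frac (R : realType) (a c Q : nat) (f : int) :
  (1 < c)%N -> (c <= a)%N -> (0 < Q)%N ->
  let r := f%:~R / Q%:R : R in
  (c.-1)%:R / a%:R - 1 / (2 * a%:R ^+ 2) <= r /\
  r <= (c.-1)%:R / a%:R + 1 / (2 * a%:R ^+ 2) ->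
  (0 < f)%R /\ (f < Q%:Z)%R.
Proof.
move=> c1 ca Q0 r [hl hu].
have hC : 1 <= (c.-1)%:R :> R by rewrite ler1n; lia.
have hCA : (c.-1)%:R + 1 <= a%:R :> R.
  by rewrite natr1 ler_nat; lia.
have A0 : 0 < a%:R :> R by lra.
have Q0' : 0 < Q%:R :> R by rewrite ltr0n.
have e1 : (c.-1)%:R / a%:R - 1 / (2 * a%:R ^+ 2) =
   (2 * a%:R * (c.-1)%:R - 1) / (2 * a%:R ^+ 2) :> R.
  by field; rewrite lt0r_neq0.
have e2 : (c.-1)%:R / a%:R + 1 / (2 * a%:R ^+ 2) =
   (2 * a%:R * (c.-1)%:R + 1) / (2 * a%:R ^+ 2) :> R.
  by field; rewrite lt0r_neq0.
have D0 : 0 < 2 * a%:R ^+ 2 :> R by rewrite expr2; nra.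
have rpos : 0 < r.
  apply: lt_le_trans hl; rewrite e1 divr_gt0 //; nra.
have rlt1 : r < 1.
  apply: le_lt_trans hu _; rewrite e2 ltr_pdivrMr // mul1r expr2; nra.
have fpos : 0 < f%:~R :> R.
  by rewrite -[f%:~R](divfK (lt0r_neq0 Q0')) mulr_gt0.
split; first by rewrite -(ltr0z R).
rewrite -(ltr_int R).
have -> : (Q%:Z)%:~R = Q%:R :> R by [].
by move: rlt1; rewrite /r ltr_pdivrMr // mul1r.
Qed.

Lemma phiinv_spec q n : (1 <= n)%N ->
  S_Q q (phi_Q_inv q n) /\ phi_Q q (phi_Q_inv q n) = n.
Proof.
move=> n1; have [t ht] := phi_surj q n1.
exact: (@xgetPex _ (0%N, 0%N, 0%N) [set t | S_Q q t /\ phi_Q q t = n] (ex_intro _ t ht)).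
Qed.

Lemma digit (R : realType) q F n : basic_seq q -> Q_special R q F -> (1 <= n)%N ->
  (0 <= E_F q F n)%R /\ (E_F q F n < (q n)%:Z)%R.
Proof.
move=> bq QS n1; have [St pt] := phiinv_spec q n1.
rewrite /E_F; move: St pt; case: (phi_Q_inv q n) => [[a b] c] St pt.
have [h1 h2] := QS a b c St.
have qn : (2 <= q n)%N by apply: bq.
case: St => a1 b1 bl c1 ca.
case: (ltnP 1 c) => hc.
  have q0 : (0 < q n)%N by lia.
  have := @real_frac R a c (q n) (F (a, b, c)) hc ca q0.
  have h2' := h2 hc; rewrite pt in h2'.
  by move=> /(_ h2') [/ltW].
have -> : F (a, b, c) = 0 by apply: h1; lia.
split => //; rewrite ltz_nat; lia.
Qed.

Lemma digit_zero (R : realType) q F a : Q_special R q F -> E_F q F (LL q a).+1 = 0.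
Proof.
move=> QS; have [St pt] := phiinv_spec q (ltn0Sn (LL q a)).
have c1 := zero_pos St pt.
rewrite /E_F; move: St c1; case: (phi_Q_inv q _) => [[a' b'] c'] St /= c1.
by have [h1 _] := QS a' b' c' St; apply: h1.
Qed.

Section Anal.
Variable R : realType.
Variable q : nat -> nat.
Hypothesis bq : basic_seq q.
Variable F : nat * nat * nat -> int.
Hypothesis QS : Q_special R q F.

Definition Pn (n : nat) : nat := (\prod_(1 <= k < n.+1) q k)%N.
Definition Pi (n : nat) : R := (Pn n)%:R.
Definition term (n : nat) : R := (E_F q F n)%:~R / Pi n.
Definition Ssum (N : nat) : R := \sum_(1 <= n < N) term n.

Lemma Pn_succ n : Pn n.+1 = (Pn n * q n.+1)%N.
Proof. by rewrite /Pn big_nat_recr. Qed.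

Lemma Pn_ge n : (n < Pn n)%N.
Proof.
elim: n => [|n IH]; first by rewrite /Pn big_geq.
rewrite Pn_succ; have := bq (ltn0Sn n); nia.
Qed.

Lemma Pi_gt0 n : 0 < Pi n.
Proof. rewrite /Pi ltr0n; have := Pn_ge n; lia. Qed.

Lemma Pi_succ n : Pi n.+1 = Pi n * (q n.+1)%:R.
Proof. by rewrite /Pi Pn_succ natrM. Qed.

Lemma term_ge0 n : (1 <= n)%N -> 0 <= term n.
Proof.
move=> n1; have [h _] := digit bq QS n1.
by rewrite /term divr_ge0 ?ler0z // ltW // Pi_gt0.
Qed.

Lemma term_le n : term n.+1 <= 1 / Pi n - 1 / Pi n.+1.
Proof.
have [_ h] := digit bq QS (ltn0Sn n).
have h' : (E_F q F n.+1)%:~R <= (q n.+1)%:R - 1 :> R.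
  have : (E_F q F n.+1 + 1 <= (q n.+1)%:Z)%R by rewrite lezD1.
  rewrite -(ler_int R) intrD /= => H; lra.
have P0 := Pi_gt0 n.
have q0 : 0 < (q n.+1)%:R :> R by rewrite ltr0n; have := bq (ltn0Sn n); lia.
have -> : 1 / Pi n - 1 / Pi n.+1 = ((q n.+1)%:R - 1) / Pi n.+1.
  by rewrite Pi_succ; field; rewrite !lt0r_neq0.
by rewrite /term ler_pM2r // invr_gt0 Pi_gt0.
Qed.

Lemma tail m j : \sum_(m.+1 <= n < m.+1 + j) term n <= 1 / Pi m - 1 / Pi (m + j).
Proof.
elim: j => [|j IH]; first by rewrite big_geq ?addn0 ?subrr.
rewrite addnS big_nat_recr /=; last lia.
have := term_le (m + j); rewrite addSn addnS; lra.
Qed.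

Lemma S_nd : nondecreasing_seq Ssum.
Proof.
apply/nondecreasing_seqP => N; case: N => [|N].
  by rewrite /Ssum !big_geq.
rewrite /Ssum [X in _ <= X]big_nat_recr //=; have := term_ge0 (ltn0Sn N); lra.
Qed.

Lemma S_le1 N : Ssum N <= 1.
Proof.
case: N => [|N]; first by rewrite /Ssum big_geq.
have := tail 0 N; rewrite add0n /Ssum => H; apply: le_trans H _.
have := Pi_gt0 N; have -> : Pi 0 = 1 by rewrite /Pi /Pn big_geq.
move=> h; rewrite divr1 lerBlDr lerDl divr_ge0 // ltW.
Qed.

Lemma S_cvg : cvgn Ssum.
Proof.
apply: nondecreasing_is_cvgn; first exact: S_nd.
by exists 1 => _ [n _ <-]; apply: S_le1.
Qed.

Lemma S_int M : exists D : int, Ssum M.+1 = D%:~R / Pi M.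
Proof.
elim: M => [|M [D HD]].
  by exists 0; rewrite /Ssum big_geq // mul0r.
exists (D * (q M.+1)%:Z + E_F q F M.+1)%R.
rewrite /Ssum big_nat_recr //= -/(Ssum M.+1) HD /term Pi_succ.
have := Pi_gt0 M; have q0 : 0 < (q M.+1)%:R :> R
  by rewrite ltr0n; have := bq (ltn0Sn M); lia.
move=> P0; rewrite intrD intrM /=.
by field; rewrite !lt0r_neq0.
Qed.

Lemma gap a : exists D : int,
  D%:~R / Pi (LL q a) <= limn Ssum <= D%:~R / Pi (LL q a) + 1 / (2 * Pi (LL q a)).
Proof.
set p := (LL q a).+1.
have [D HD] := S_int (LL q a).
exists D.
have key : forall j, D%:~R / Pi (LL q a) <= Ssum (p.+1 + j) <=
           D%:~R / Pi (LL q a) + 1 / (2 * Pi (LL q a)).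
  move=> j.
  have -> : Ssum (p.+1 + j) = Ssum p + term p + \sum_(p.+1 <= n < p.+1 + j) term n.
    rewrite /Ssum (big_cat_nat (n := p.+1)) //=; last lia.
    by rewrite big_nat_recr.
  have -> : term p = 0 by rewrite /term (digit_zero (R := R)) // mul0r.
  have T := tail p j.
  have T0 : 0 <= \sum_(p.+1 <= n < p.+1 + j) term n.
    by rewrite big_nat_cond; apply: sumr_ge0 => n /andP [/andP [h _] _]; apply: term_ge0; lia.
  rewrite /p HD addr0.
  have P0 := Pi_gt0 (LL q a); have P1 := Pi_gt0 (p + j).
  have q2 : 2 <= (q p)%:R :> R by rewrite ler_nat; apply: bq.
  have : 1 / Pi p <= 1 / (2 * Pi (LL q a)).
    rewrite /p Pi_succ !div1r lef_pV2 ?posrE ?mulr_gt0 //; try nra; try lra.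
  have : 0 <= 1 / Pi (p + j) by rewrite divr_ge0 // ltW.
  rewrite /p in T T0 *; move=> h1 h2.
  apply/andP; split; lra.
apply/andP; split.
- apply: limr_ge; first exact: S_cvg.
  near=> N; have hN : (p.+1 <= N)%N by near: N; exact: nbhs_infty_ge.
  by rewrite -(subnKC hN); case/andP: (key (N - p.+1)%N).
- apply: limr_le; first exact: S_cvg.
  near=> N; have hN : (p.+1 <= N)%N by near: N; exact: nbhs_infty_ge.
  by rewrite -(subnKC hN); case/andP: (key (N - p.+1)%N).
Unshelve. all: by end_near.
Qed.
End Anal.

Lemma ballR (R : realType) (x y e : R) : ball x e y -> -e < x - y < e.
Proof. by rewrite -ball_normE /= ltr_norml. Qed.

Theorem mainTheorem4 (R : realType) (q : nat -> nat) :
  basic_seq q -> infinite_in_limit q -> nowhere_dense (Theta_Q R q).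
Proof.
move=> bq _; rewrite /nowhere_dense; apply/seteqP; split=> // x hx.
move/nbhs_ballP: hx => [e e0 he].
set K := Num.bound (1 / e).
have hK : 1 / e < K%:R by apply: archi_boundP; rewrite divr_ge0 // ltW.
set P := Pi R q (LL q K).
have P0 : 0 < P by apply: Pi_gt0.
have PK : K%:R <= P.
  rewrite /P /Pi ler_nat; have := Pn_ge bq (LL q K); have := LL_ge q K; lia.
have eP : 1 < e * P.
  have : 1 / e < P by lra.
  by rewrite ltr_pdivrMr // mulrC.
set D0 := Num.floor (P * x).
have f1 : D0%:~R <= P * x by apply: floor_le.
have f2 : P * x < D0%:~R + 1.
  have : (D0 < D0 + 1)%R by rewrite ltzD1.
  by rewrite floor_lt_int intrD.
set y := (D0%:~R + 3 / 4) / P.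
have yP : y * P = D0%:~R + 3 / 4 by rewrite /y divfK // lt0r_neq0.
have hy : ball x e y.
  rewrite -ball_normE /= ltr_norml.
  have : (x - y) * P = P * x - D0%:~R - 3 / 4.
    by rewrite mulrBl yP; ring.
  move=> h.
  have h3 : 0 < (x - y + e) * P by nra.
  have h4 : 0 < (e - (x - y)) * P by nra.
  rewrite pmulr_lgt0 // in h3; rewrite pmulr_lgt0 // in h4.
  apply/andP; split; lra.
have nb : nbhs y (ball y (1 / (4 * P))).
  by apply: nbhsx_ballx; rewrite divr_gt0 // mulr_gt0.
have [z [[F [QF ->]] bz]] := he y hy _ nb.
have [D /andP [g1 g2]] := gap bq QF K.
move/ballR: bz => /andP [b1 b2].
have hz : x_F R q F = limn (Ssum R q F) by [].
rewrite hz in b1 b2.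
rewrite -/P in g1 g2.
move: g1 g2 b1 b2; set w := limn (Ssum R q F) => g1 g2 b1 b2.
have m1 : D%:~R <= w * P by rewrite -ler_pdivrMr.
have m2 : w * P <= D%:~R + 1 / 2.
  have ee : D%:~R / P + 1 / (2 * P) = (D%:~R + 1 / 2) / P.
    by field; rewrite lt0r_neq0.
  by rewrite -ler_pdivlMr // -ee.
have ee : 1 / (4 * P) = (1 / 4) / P by field; rewrite lt0r_neq0.
rewrite ee in b1 b2.
have m3 : (y - w) * P < 1 / 4 by rewrite ltr_pdivlMr // in b2.
have m4 : - (1 / 4) < (y - w) * P.
  have : - ((1 / 4) / P) = (- (1 / 4)) / P by rewrite mulNr.
  by move=> E; rewrite E ltr_pdivrMr // in b1.
rewrite mulrBl yP in m3 m4.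
have hA : (D0 < D)%R.
  rewrite -(ltr_int R); clear -m1 m2 m3 m4; lra.
have hB : (D < D0 + 1)%R.
  rewrite -(ltr_int R) intrD; clear -m1 m2 m3 m4; lra.
clear -hA hB; lia.
Qed.
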